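(* Let $R$ be a commutative noetherian ring and $\mathfrak{a}$ an ideal contained in the Jacobson radical of $R$. Then $R$ is $\mathfrak{a}$-adically complete if and only if the $\mathfrak{a}$-adic completion $\widehat{R}^{\mathfrak{a}}$ is a finitely generated $R$-module.
   Context: A module $M$ is $\mathfrak{a}$-adically complete if the natural map $M\to \widehat{M}^{\mathfrak{a}}=\varprojlim_n M/\mathfrak{a}^nM$ is an isomorphism. *)

(* Defs.v *)
From HB Require Import structures.
From mathcomp Require Import all_boot all_algebra.
Set Implicit Arguments. Unset Strict Implicit. Unset Printing Implicit Defensive.
Import GRing.Theory.
Local Open Scope ring_scope.

Section CommAlg.
Variable R : comPzRingType.

Definition is_ideal (I : R -> Prop) : Prop :=
  [/\ I 0, (forall x y, I x -> I y -> I (x + y)) & (forall r x, I x -> I (r * x))].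

Definition in_ideal_gen (s : seq R) (x : R) : Prop :=
  exists c : 'I_(size s) -> R, x = \sum_(i < size s) c i * s`_i.

Definition fg_ideal (I : R -> Prop) : Prop :=
  exists s : seq R, forall x, I x <-> in_ideal_gen s x.

Definition noetherian : Prop := forall I, is_ideal I -> fg_ideal I.

Definition proper_ideal (I : R -> Prop) : Prop := is_ideal I /\ ~ I 1.

Definition maximal_ideal (m : R -> Prop) : Prop :=
  proper_ideal m /\
  forall J, proper_ideal J -> (forall x, m x -> J x) -> forall x, J x -> m x.

Definition jacobson_radical (x : R) : Prop :=
  forall m, maximal_ideal m -> m x.

Definition ideal_mul (I J : R -> Prop) (x : R) : Prop :=
  exists (k : nat) (u v : 'I_k -> R),
    [/\ forall i, I (u i), forall i, J (v i) & x = \sum_(i < k) u i * v i].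

Fixpoint ideal_pow (a : R -> Prop) (n : nat) : R -> Prop :=
  match n with
  | 0 => fun _ => True
  | n'.+1 => ideal_mul a (ideal_pow a n')
  end.

(* The a-adic completion  lim_n R/a^n R  is represented as a setoid:
   an element is a sequence (x_n) of representatives x_n of classes in R/a^n
   compatible with the projections R/a^(n+1) -> R/a^n, and two such
   sequences are identified when x_n = y_n mod a^n for all n. *)
Definition compat_seq (a : R -> Prop) (x : nat -> R) : Prop :=
  forall n, ideal_pow a n (x n.+1 - x n).

Definition compl_eq (a : R -> Prop) (x y : nat -> R) : Prop :=
  forall n, ideal_pow a n (x n - y n).

Definition compl_of (r : R) : nat -> R := fun _ => r.

Definition adically_complete (a : R -> Prop) : Prop :=
  (forall r s, compl_eq a (compl_of r) (compl_of s) -> r = s) /\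
  (forall x, compat_seq a x -> exists r, compl_eq a (compl_of r) x).

Definition completion_fg (a : R -> Prop) : Prop :=
  exists (k : nat) (g : 'I_k -> nat -> R),
    (forall i, compat_seq a (g i)) /\
    forall x, compat_seq a x ->
      exists c : 'I_k -> R, compl_eq a x (fun n => \sum_(i < k) c i * g i n).

End CommAlg.

(* Main.v *)
Require Import Defs.
From mathcomp Require Import all_boot all_algebra all_fingroup.
From Stdlib Require Import Classical ClassicalEpsilon.
Set Implicit Arguments. Unset Strict Implicit. Unset Printing Implicit Defensive.
Import GRing.Theory.
Local Open Scope ring_scope.

Section Basics.
Variable R : comPzRingType.
Implicit Types (I J a c : R -> Prop).

Lemma I0 I : is_ideal I -> I 0. Proof. by case. Qed.
Lemma ID I x y : is_ideal I -> I x -> I y -> I (x + y). Proof. by case=> _ h _; apply: h. Qed.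
Lemma IM I r x : is_ideal I -> I x -> I (r * x). Proof. by case=> _ _ h; apply: h. Qed.
Lemma IMr I r x : is_ideal I -> I x -> I (x * r). Proof. by move=> hI hx; rewrite mulrC; apply: IM. Qed.
Lemma IN I x : is_ideal I -> I x -> I (- x).
Proof. by move=> hI hx; rewrite -mulN1r; apply: IM. Qed.
Lemma IB I x y : is_ideal I -> I x -> I y -> I (x - y).
Proof. by move=> hI hx hy; apply: ID => //; apply: IN. Qed.
Lemma Isum I (T : Type) (r : seq T) (P : pred T) (F : T -> R) :
  is_ideal I -> (forall i, P i -> I (F i)) -> I (\sum_(i <- r | P i) F i).
Proof. by move=> hI hF; apply: (big_ind I) => //; [apply: I0 | move=> x y; apply: ID]. Qed.

Lemma ideal_mul_ideal I J : is_ideal I -> is_ideal (ideal_mul I J).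
Proof.
move=> hI; split.
- exists 0%N, (fun _ => 0), (fun _ => 0); split => //; try by case.
  by rewrite big_ord0.
- move=> x y [k1 [u1 [v1 [hu1 hv1 ->]]]] [k2 [u2 [v2 [hu2 hv2 ->]]]].
  exists (k1 + k2)%N.
  exists (fun i => match split i with inl j => u1 j | inr j => u2 j end).
  exists (fun i => match split i with inl j => v1 j | inr j => v2 j end).
  split.
  + by move=> i; case: (split i).
  + by move=> i; case: (split i).
  + rewrite big_split_ord /=; congr (_ + _); apply: eq_bigr => i _.
    * by rewrite (unsplitK (inl i)).
    * by rewrite (unsplitK (inr i)).
- move=> r x [k [u [v [hu hv ->]]]].
  exists k, (fun i => r * u i), v; split => //.
  + by move=> i; apply: IM.
  + by rewrite mulr_sumr; apply: eq_bigr => i _; rewrite mulrA.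
Qed.

Lemma mul_sub_r I J y : is_ideal J -> ideal_mul I J y -> J y.
Proof. by move=> hJ [k [u [v [_ hv ->]]]]; apply: Isum => // i _; apply: IM. Qed.
Lemma mul_sub_l I J y : is_ideal I -> ideal_mul I J y -> I y.
Proof. by move=> hI [k [u [v [hu _ ->]]]]; apply: Isum => // i _; apply: IMr. Qed.
Lemma mul_intro I J x y : I x -> J y -> ideal_mul I J (x * y).
Proof.
move=> hx hy; exists 1%N, (fun _ => x), (fun _ => y); split => //.
by rewrite big_ord1.
Qed.

Lemma pow_ideal a n : is_ideal a -> is_ideal (ideal_pow a n).
Proof.
move=> ha; case: n => [|n] /=; last by apply: ideal_mul_ideal.
by split.
Qed.

Lemma pow_le a m n y : is_ideal a -> (m <= n)%N -> ideal_pow a n y -> ideal_pow a m y.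
Proof.
move=> ha; elim: n => [|n IH]; first by rewrite leqn0 => /eqP ->.
rewrite leq_eqVlt => /orP [/eqP -> //| hm] hy; apply: IH => //.
by apply: (mul_sub_r (pow_ideal n ha)) hy.
Qed.

Lemma pow_sub1 a n y : is_ideal a -> ideal_pow a n.+1 y -> a y.
Proof. by move=> ha /= /(mul_sub_l ha). Qed.


Lemma gen_mem (s : seq R) (i : 'I_(size s)) : in_ideal_gen s s`_i.
Proof.
exists (fun j => (j == i)%:R); rewrite (bigD1 i) //= eqxx mul1r big1 ?addr0 //.
by move=> j /negbTE ->; rewrite mul0r.
Qed.

Lemma gen_sub (s : seq R) J y : is_ideal J -> (forall i : 'I_(size s), J s`_i) ->
  in_ideal_gen s y -> J y.
Proof. by move=> hJ hs [c ->]; apply: Isum => // i _; apply: IM. Qed.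

Lemma gen_ideal (s : seq R) : is_ideal (in_ideal_gen s).
Proof.
split.
- by exists (fun _ => 0); rewrite big1 // => i _; rewrite mul0r.
- move=> x y [c1 ->] [c2 ->]; exists (fun i => c1 i + c2 i).
  by rewrite -big_split; apply: eq_bigr => i _; rewrite mulrDl.
- move=> r x [c ->]; exists (fun i => r * c i).
  by rewrite mulr_sumr; apply: eq_bigr => i _; rewrite mulrA.
Qed.

Lemma max_principle (F : (R -> Prop) -> Prop) : noetherian R ->
  (forall c, F c -> is_ideal c) -> forall c0, F c0 ->
  exists c, F c /\ (forall J, F J -> (forall x, c x -> J x) -> forall x, J x -> c x).
Proof.
move=> hN hF c0 Fc0; apply: NNPP => Hn.
have step : forall c, F c -> exists J, F J /\ (forall x, c x -> J x) /\ ~ (forall x, J x -> c x).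
  move=> c Fc; apply: NNPP => H2; apply: Hn; exists c; split => // J FJ cJ.
  apply: NNPP => H3; apply: H2; exists J; split => //.
pose S := {c : R -> Prop | F c}.
have f : forall s : S, {t : S | (forall x, sval s x -> sval t x) /\ ~ (forall x, sval t x -> sval s x)}.
  move=> [c Fc]; apply: constructive_indefinite_description.
  have [J [FJ [h1 h2]]] := step c Fc.
  by exists (exist _ J FJ).
pose g (s : S) := sval (f s).
pose ch n := iter n g (exist _ c0 Fc0).
have mono : forall n m, (n <= m)%N -> forall x, sval (ch n) x -> sval (ch m) x.
  move=> n m /subnK <-; elim: (m - n)%N => [//|d IH] x hx.
  rewrite addSn /ch iterS; apply: (proj1 (svalP (f _))); exact: IH.
pose U x := exists n, sval (ch n) x.
have idc : forall n, is_ideal (sval (ch n)) by move=> n; apply: hF; exact: (svalP (ch n)).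
have hU : is_ideal U.
  split.
  - by exists 0%N; apply: I0.
  - move=> x y [n hx] [m hy]; exists (maxn n m); apply: ID => //.
    + by apply: (mono n) => //; rewrite leq_maxl.
    + by apply: (mono m) => //; rewrite leq_maxr.
  - by move=> r x [n hx]; exists n; apply: IM.
have [s hs] := hN U hU.
have hfin : forall m, (m <= size s)%N -> exists N, forall i : 'I_(size s), (i < m)%N -> sval (ch N) s`_i.
  elim => [|m IH] hm; first by exists 0%N.
  have [N hN'] := IH (ltnW hm).
  have := (proj2 (hs s`_m)) (gen_mem (Ordinal hm)) => -[M hM].
  exists (maxn N M) => i; rewrite ltnS leq_eqVlt => /orP [/eqP ei|hi].
  - by apply: (mono M); [rewrite leq_maxr | rewrite ei].
  - by apply: (mono N); [rewrite leq_maxl | apply: hN'].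
have [N hN'] := hfin (size s) (leqnn _).
have sub : forall x, U x -> sval (ch N) x.
  move=> x /hs; apply: gen_sub => // i; exact: hN'.
apply: (proj2 (svalP (f (ch N)))) => x hx; apply: sub; exists N.+1.
by rewrite /ch iterS.
Qed.

Lemma max_ideal_ext (I : R -> Prop) : noetherian R -> Defs.proper_ideal I ->
  exists m, maximal_ideal m /\ forall x, I x -> m x.
Proof.
move=> hN hI.
have [m [[pm Im] hm]] := @max_principle (fun J => Defs.proper_ideal J /\ forall x, I x -> J x) hN
  (fun c h => proj1 (proj1 h)) I (conj hI (fun x h => h)).
exists m; split => //; rewrite /maximal_ideal; split => // J pJ mJ; apply: hm => //=; split => // x /Im; exact: mJ.
Qed.

Lemma jac_unit (t : R) : noetherian R -> jacobson_radical t -> exists v, (1 + t) * v = 1.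
Proof.
move=> hN ht.
pose I x := exists r, x = r * (1 + t).
have hI : is_ideal I.
  split.
  - by exists 0; rewrite mul0r.
  - by move=> x y [r ->] [r' ->]; exists (r + r'); rewrite mulrDl.
  - by move=> r x [r' ->]; exists (r * r'); rewrite mulrA.
case: (classic (I 1)) => [[r hr]|n1]; first by exists r; rewrite mulrC.
have [m [mm Im]] := max_ideal_ext hN (conj hI n1).
have mt := ht m mm.
have m1t : m (1 + t) by apply: Im; exists 1; rewrite mul1r.
case: (proj1 mm) => hm; case; have -> : (1 : R) = (1 + t) - t by rewrite addrK.
exact: IB.
Qed.


Lemma core_mx (J : R -> Prop) k (B : 'M[R]_k) (G r : 'cV[R]_k) : is_ideal J ->
  (forall i, J (((1%:M - B) *m G - r) i 0)) ->
  forall i, J ((\det (1%:M - B) *: G - \adj (1%:M - B) *m r) i 0).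
Proof.
move=> hJ hG i.
have -> : \det (1%:M - B) *: G - \adj (1%:M - B) *m r =
          \adj (1%:M - B) *m ((1%:M - B) *m G - r).
  by rewrite mulmxBr mulmxA mul_adj_mx mul_scalar_mx.
by rewrite mxE; apply: Isum => // j _; apply: IM.
Qed.

Lemma det_1J (a : R -> Prop) k (B : 'M[R]_k) : is_ideal a ->
  (forall i j, a (B i j)) -> a (\det (1%:M - B) - 1).
Proof.
move=> ha hB; rewrite /determinant (bigD1 (1%g : 'S_k)) //= odd_perm1 expr0 mul1r.
rewrite addrAC; apply: ID => //.
- have : forall (P : pred 'I_k), a (\prod_(i | P i) (1%:M - B) i ((1%g : 'S_k) i) - 1).
    move=> P; apply: (big_ind (fun x => a (x - 1))); first by rewrite subrr; apply: I0.
    + move=> x y hx hy; have -> : x * y - 1 = x * (y - 1) + (x - 1) by rewrite mulrBr mulr1 addrA subrK.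
      by apply: ID => //; apply: IM.
    + move=> i _; rewrite perm1 !mxE eqxx mulr1n addrAC subrr add0r.
      by apply: IN.
  by apply.
- apply: Isum => // s hs.
  have [i hi] : exists i, s i != i.
    apply: NNPP => hn; move/eqP: hs; apply; apply/permP => i; rewrite perm1.
    by apply/eqP; apply: NNPP => h; apply: hn; exists i; apply/negP.
  apply: IM => //; rewrite (bigD1 i) //=; apply: IMr => //.
  by rewrite !mxE eq_sym (negbTE hi) mulr0n sub0r; apply: IN.
Qed.


Lemma ideal_ext I J : (forall y, I y <-> J y) -> is_ideal J -> is_ideal I.
Proof.
move=> h [h0 hD hM]; split.
- by apply/h.
- by move=> x y /h hx /h hy; apply/h; apply: hD.
- by move=> r x /h hx; apply/h; apply: hM.
Qed.

Lemma K1 I I' (x : R) : is_ideal I' ->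
  (forall y, I y -> exists r z, I' z /\ y = x * r + z) ->
  forall n j y, (j <= n)%N -> ideal_pow I n y ->
  exists r z, ideal_pow I' (n - j) z /\ y = x ^+ j * r + z.
Proof.
move=> hI' HI.
pose Q j m y := exists r z, ideal_pow I' m z /\ y = x ^+ j * r + z.
have hQ : forall j m, is_ideal (Q j m).
  move=> j m; split.
  - by exists 0, 0; rewrite mulr0 addr0; split => //; apply: I0; exact: pow_ideal.
  - move=> y1 y2 [r1 [z1 [h1 ->]]] [r2 [z2 [h2 ->]]]; exists (r1 + r2), (z1 + z2); split.
    + by apply: ID => //; exact: pow_ideal.
    + by rewrite mulrDr addrACA.
  - move=> r y [r1 [z1 [h1 ->]]]; exists (r * r1), (r * z1); split.
    + by apply: IM => //; exact: pow_ideal.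
    + by rewrite mulrDr mulrCA.
have Q0 : forall j y, Q j 0%N y by move=> j y; exists 0, y; rewrite mulr0 add0r.
have Qz : forall m y, Q 0%N m y.
  by move=> m y; exists y, 0; rewrite expr0 mul1r addr0; split => //; apply: I0; exact: pow_ideal.
elim => [|n IH] j y.
  by rewrite leqn0 => /eqP -> _; apply: Q0.
case: j => [|j] hj; first by move=> _; apply: Qz.
move=> [k [u [v [hu hv ->]]]].
rewrite subSS; change (Q j.+1 (n - j)%N (\sum_(i < k) u i * v i)).
apply: Isum => // i _.
have [r [z [hz ->]]] := HI _ (hu i).
case E: (n - j)%N => [|m]; first by apply: Q0.
have [r' [z' [hz' ev]]] := IH j (v i) hj (hv i).
rewrite mulrDl; apply: ID => //.
- rewrite ev mulrDr; apply: ID => //.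
  + by exists (r * r'), 0; rewrite exprS addr0 mulrACA; split => //; apply: I0; exact: pow_ideal.
  + exists 0, (x * r * z'); rewrite mulr0 add0r; split => //.
    by apply: IM => //; [exact: pow_ideal | rewrite -E].
- have hjn : (j.+1 <= n)%N by rewrite -subn_gt0 E.
  have [r2 [z2 [hz2 ev2]]] := IH j.+1 (v i) hjn (hv i).
  rewrite ev2 mulrDr; apply: ID => //.
  + exists (z * r2), 0; rewrite addr0 mulrCA; split => //; apply: I0; exact: pow_ideal.
  + exists 0, (z * z2); rewrite mulr0 add0r; split => //=.
    by move: hz2; rewrite subnS E => hz2; apply: mul_intro.
Qed.

Lemma K2 (s : seq R) : forall I c, is_ideal c -> (forall y, I y <-> in_ideal_gen s y) ->
  (forall i : 'I_(size s), exists k, c (s`_i ^+ k)) ->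
  exists N, forall y, ideal_pow I N y -> c y.
Proof.
elim: s => [|x s IH] I c hc hI hs.
  exists 1%N => y /= /(mul_sub_l (ideal_ext hI (gen_ideal _))) /hI [cf ->].
  by rewrite big_ord0; apply: I0.
have [N' HN'] := IH (in_ideal_gen s) c hc (fun y => conj id id)
  (fun i => hs (lift ord0 i)).
have [k hk] := hs ord0.
exists (k + N')%N => y hy.
have HI : forall y, I y -> exists r z, in_ideal_gen s z /\ y = x * r + z.
  move=> y' /hI [cf ->]; rewrite big_ord_recl /=.
  exists (cf ord0), (\sum_(i < size s) cf (lift ord0 i) * s`_i); split.
  + by exists (fun i => cf (lift ord0 i)).
  + by rewrite mulrC.
have [r [z [hz ->]]] := K1 (gen_ideal s) HI (leq_addr N' k) hy.
apply: ID => //; first by apply: IMr.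
by apply: HN'; rewrite addKn in hz.
Qed.


Lemma decomp1 (a M : R -> Prop) (t : seq R) y : (forall z, M z <-> in_ideal_gen t z) ->
  is_ideal a -> ideal_mul a M y ->
  exists b : 'I_(size t) -> R, (forall l, a (b l)) /\ y = \sum_(l < size t) b l * t`_l.
Proof.
move=> hM ha [k [u [v [hu hv ->]]]].
pose cf j := proj1_sig (constructive_indefinite_description _ (proj1 (hM _) (hv j))).
have hcf : forall j, v j = \sum_(l < size t) cf j l * t`_l.
  by move=> j; rewrite /cf; case: (constructive_indefinite_description _ _).
exists (fun l => \sum_j u j * cf j l); split.
- by move=> l; apply: Isum => // j _; apply: IMr.
- under eq_bigr => j _ do rewrite hcf mulr_sumr.
  rewrite exchange_big /=; apply: eq_bigr => l _; rewrite mulr_suml.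
  by apply: eq_bigr => j _; rewrite mulrA.
Qed.

Lemma decomp2 (a J : R -> Prop) (s : seq R) y : (forall z, a z <-> in_ideal_gen s z) ->
  is_ideal J -> ideal_mul a J y ->
  exists w : 'I_(size s) -> R, (forall l, J (w l)) /\ y = \sum_(l < size s) s`_l * w l.
Proof.
move=> hA hJ [k [u [v [hu hv ->]]]].
pose cf j := proj1_sig (constructive_indefinite_description _ (proj1 (hA _) (hu j))).
have hcf : forall j, u j = \sum_(l < size s) cf j l * s`_l.
  by move=> j; rewrite /cf; case: (constructive_indefinite_description _ _).
exists (fun l => \sum_j cf j l * v j); split.
- by move=> l; apply: Isum => // j _; apply: IM.
- under eq_bigr => j _ do rewrite hcf mulr_suml.
  rewrite exchange_big /=; apply: eq_bigr => l _; rewrite mulr_sumr.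
  by apply: eq_bigr => j _; rewrite mulrCA mulrA.
Qed.

Definition Kint (a : R -> Prop) y := forall n, ideal_pow a n y.

Lemma Kint_ideal a : is_ideal a -> is_ideal (Kint a).
Proof.
move=> ha; split.
- by move=> n; apply: I0; apply: pow_ideal.
- by move=> x y hx hy n; apply: ID; [apply: pow_ideal | apply: hx | apply: hy].
- by move=> r x hx n; apply: IM; [apply: pow_ideal | apply: hx].
Qed.

Lemma krull (a : R -> Prop) : noetherian R -> is_ideal a ->
  forall y, Kint a y -> ideal_mul a (Kint a) y.
Proof.
move=> hN ha.
have hK := Kint_ideal ha.
set K := Kint a in hK *.
set aK := ideal_mul a K.
have haK : is_ideal aK by apply: ideal_mul_ideal.
have aKK : forall y, aK y -> K y by move=> y; apply: mul_sub_r.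
pose F c := is_ideal c /\ forall y, c y -> K y -> aK y.
have [c [[hc cF] cmax]] := @max_principle F hN (fun c h => proj1 h) aK (conj haK (fun y h _ => h)).
pose caK y := exists u v, c u /\ aK v /\ y = u + v.
have hcaK : is_ideal caK.
  split.
  - by exists 0, 0; rewrite addr0; split; [apply: I0 | split => //; apply: I0].
  - move=> x y [u1 [v1 [h1 [h1' ->]]]] [u2 [v2 [h2 [h2' ->]]]].
    exists (u1 + u2), (v1 + v2); split; first by apply: ID.
    by split; [apply: ID | rewrite addrACA].
  - move=> r x [u [v [h [h' ->]]]]; exists (r * u), (r * v); split; first by apply: IM.
    by split; [apply: IM | rewrite mulrDr].
have aKc : forall y, aK y -> c y.
  have Fc : F caK.
    split => // y [u [v [hu [hv ->]]]] hy.
    have Ku : K u.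
      have -> : u = (u + v) - v by rewrite addrK.
      by apply: (IB hK) => //; apply: aKK.
    by apply: ID => //; apply: cF.
  move=> y hy; apply: (cmax caK Fc).
  - by move=> x hx; exists x, 0; rewrite addr0; split => //; split => //; apply: I0.
  - by exists 0, y; rewrite add0r; split => //; apply: I0.
have powc : forall x, a x -> exists k, c (x ^+ k).
  move=> x hx.
  pose G J := exists j, forall y, J y <-> c (x ^+ j * y).
  have hG : forall J, G J -> is_ideal J.
    move=> J [j hj]; apply: (ideal_ext hj); split.
    - by rewrite mulr0; apply: I0.
    - by move=> y1 y2 h1 h2; rewrite mulrDr; apply: ID.
    - by move=> r y h; rewrite mulrCA; apply: IM.
  have [J [[k hk] Jmax]] := @max_principle G hN hG (fun y => c (x ^+ 0 * y)) (ex_intro _ 0%N (fun y => conj id id)).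
  have stab : forall y, c (x ^+ k.+1 * y) -> c (x ^+ k * y).
    move=> y h; apply/hk; apply: (Jmax (fun y => c (x ^+ k.+1 * y))).
    - by exists k.+1.
    - by move=> z /hk hz; rewrite exprS -mulrA; apply: IM.
    - exact: h.
  exists k.
  pose D y := exists u r, c u /\ y = u + x ^+ k * r.
  have hD : F D.
    split.
    - split.
      + by exists 0, 0; rewrite mulr0 addr0; split => //; apply: I0.
      + move=> y1 y2 [u1 [r1 [h1 ->]]] [u2 [r2 [h2 ->]]]; exists (u1 + u2), (r1 + r2).
        by split; [apply: ID | rewrite mulrDr addrACA].
      + move=> r y [u [r1 [h ->]]]; exists (r * u), (r * r1).
        by split; [apply: IM | rewrite mulrDr mulrCA].
    - move=> y [u [r [hu ey]]] hy; apply: cF => //.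
      have cxy : c (x * y) by apply: aKc; apply: mul_intro.
      have : c (x ^+ k.+1 * r).
        have -> : x ^+ k.+1 * r = x * y - x * u by rewrite ey mulrDr addrAC subrr add0r exprS mulrA.
        by apply: IB => //; apply: IM.
      by move/stab => h; rewrite ey; apply: ID.
  apply: (cmax D hD).
  - by move=> z hz; exists z, 0; rewrite mulr0 addr0.
  - by exists 0, 1; rewrite add0r mulr1; split => //; apply: I0.
have [s hs] := hN a ha.
have [N HN] := K2 hc hs (fun i => powc _ (proj2 (hs _) (gen_mem i))).
by move=> y hy; apply: cF => //; apply: HN; apply: hy.
Qed.


Lemma det_unit (a : R -> Prop) k (B : 'M[R]_k) : noetherian R -> is_ideal a ->
  (forall x, a x -> jacobson_radical x) -> (forall i j, a (B i j)) ->
  exists v, \det (1%:M - B) * v = 1.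
Proof.
move=> hN ha hJ hB; have [v hv] := jac_unit hN (hJ _ (det_1J ha hB)).
by exists v; rewrite addrC subrK in hv.
Qed.

Lemma nak (a M : R -> Prop) (t : seq R) : noetherian R -> is_ideal a ->
  (forall x, a x -> jacobson_radical x) -> (forall z, M z <-> in_ideal_gen t z) ->
  (forall y, M y -> ideal_mul a M y) -> forall y, M y -> y = 0.
Proof.
move=> hN ha hJ hM hMa.
have hb : forall i : 'I_(size t), exists b : 'I_(size t) -> R,
    (forall l, a (b l)) /\ t`_i = \sum_(l < size t) b l * t`_l.
  by move=> i; apply: (decomp1 hM ha); apply: hMa; apply/hM; apply: gen_mem.
pose bb i := proj1_sig (constructive_indefinite_description _ (hb i)).
have hbb : forall i, (forall l, a (bb i l)) /\ t`_i = \sum_(l < size t) bb i l * t`_l.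
  by move=> i; rewrite /bb; case: (constructive_indefinite_description _ _).
pose B : 'M[R]_(size t) := \matrix_(i, l) bb i l.
pose T : 'cV[R]_(size t) := \col_i t`_i.
have hz : is_ideal (fun z : R => z = 0).
  by split => // [x y -> ->|r x ->]; rewrite ?addr0 ?mulr0.
have := @core_mx (fun z => z = 0) _ B T 0 hz.
have hBa : forall i l, a (B i l) by move=> i l; rewrite mxE; apply: (proj1 (hbb i)).
have [v hv] := @det_unit a _ B hN ha hJ hBa.
move=> hc.
have hpre : forall i : 'I_(size t), ((1%:M - B) *m T - 0) i 0 = 0.
  move=> i; rewrite subr0 mulmxBl mul1mx !mxE (proj2 (hbb i)).
  apply/eqP; rewrite subr_eq0; apply/eqP; apply: eq_bigr => l _; rewrite !mxE.
  by [].
have t0 : forall i : 'I_(size t), t`_i = 0.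
  move=> i0; have -> : t`_i0 = T i0 0 by rewrite mxE.
  have := hc hpre i0; rewrite mulmx0 subr0 mxE => hd.
  have -> : T i0 0 = v * (\det (1%:M - B) * T i0 0) by rewrite mulrA (mulrC v) hv mul1r.
  by rewrite hd mulr0.
move=> y /hM [c ->]; rewrite big1 // => i _.
by rewrite (t0 i) mulr0.
Qed.

Lemma krull_zero (a : R -> Prop) : noetherian R -> is_ideal a ->
  (forall x, a x -> jacobson_radical x) -> forall y, Kint a y -> y = 0.
Proof.
move=> hN ha hJ.
have [t ht] := hN _ (Kint_ideal ha).
by apply: (nak hN ha hJ ht); apply: krull.
Qed.


Lemma approx (a : R -> Prop) (s : seq R) : is_ideal a -> (forall z, a z <-> in_ideal_gen s z) ->
  forall x, compat_seq a x -> exists r (z : 'I_(size s) -> nat -> R),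
  (forall j, compat_seq a (z j)) /\ compl_eq a x (fun n => r + \sum_(j < size s) s`_j * z j n).
Proof.
move=> ha hs x hx.
have hw : forall n, exists w : 'I_(size s) -> R, (forall l, ideal_pow a n (w l)) /\
    x n.+2 - x n.+1 = \sum_(l < size s) s`_l * w l.
  move=> n; apply: (decomp2 hs (pow_ideal n ha)); exact: (hx n.+1).
pose W n := proj1_sig (constructive_indefinite_description _ (hw n)).
have hW : forall n, (forall l, ideal_pow a n (W n l)) /\
    x n.+2 - x n.+1 = \sum_(l < size s) s`_l * W n l.
  by move=> n; rewrite /W; case: (constructive_indefinite_description _ _).
pose z j n := \sum_(k < n) W k j.
have zS : forall j n, z j n.+1 = z j n + W n j by move=> j n; rewrite /z big_ord_recr.
have hsum : forall n, \sum_(j < size s) s`_j * z j n = x n.+1 - x 1%N.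
  elim => [|n IH].
    by rewrite subrr big1 // => j _; rewrite /z big_ord0 mulr0.
  under eq_bigr => j _ do rewrite zS mulrDr.
  rewrite big_split /= IH -(proj2 (hW n)).
  by rewrite addrC addrA subrK.
exists (x 1%N), z; split.
- by move=> j n; rewrite zS addrAC subrr add0r; apply: (proj1 (hW n)).
- move=> n; rewrite hsum [x 1%N + _]addrC subrK.
  have -> : x n - x n.+1 = - (x n.+1 - x n) by rewrite opprB.
  by apply: IN; [apply: pow_ideal | apply: hx].
Qed.

Lemma surj_part (a : R -> Prop) : noetherian R -> is_ideal a ->
  (forall x, a x -> jacobson_radical x) -> completion_fg a ->
  forall x, compat_seq a x -> exists r, compl_eq a (compl_of r) x.
Proof.
move=> hN ha hJ [k [g [hg hgen]]].
have [s hs] := hN a ha.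
have hap := approx ha hs.
pose RZ i := proj1_sig (constructive_indefinite_description _ (hap _ (hg i))).
pose ZZ i := proj1_sig (constructive_indefinite_description _ (proj2_sig (constructive_indefinite_description _ (hap _ (hg i))))).
have hRZ : forall i, (forall j, compat_seq a (ZZ i j)) /\
    compl_eq a (g i) (fun n => RZ i + \sum_(j < size s) s`_j * ZZ i j n).
  move=> i; rewrite /ZZ /RZ.
  case: (constructive_indefinite_description _ _) => r /= h.
  by case: (constructive_indefinite_description _ _).
have hc : forall i j, exists c : 'I_k -> R, compl_eq a (ZZ i j) (fun n => \sum_(l < k) c l * g l n).
  by move=> i j; apply: hgen; apply: (proj1 (hRZ i)).
pose C i j := proj1_sig (constructive_indefinite_description _ (hc i j)).
have hC : forall i j, compl_eq a (ZZ i j) (fun n => \sum_(l < k) C i j l * g l n).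
  by move=> i j; rewrite /C; case: (constructive_indefinite_description _ _).
pose B : 'M[R]_k := \matrix_(i, l) \sum_(j < size s) s`_j * C i j l.
have hB : forall i l, a (B i l).
  move=> i l; rewrite mxE; apply: Isum => // j _; apply: IMr => //.
  by apply/hs; apply: gen_mem.
have [v hv] := det_unit hN ha hJ hB.
pose rr : 'cV[R]_k := \col_i RZ i.
pose rho i := v * (\adj (1%:M - B) *m rr) i 0.
have hrho : forall i n, ideal_pow a n (g i n - rho i).
  move=> i n.
  pose G : 'cV[R]_k := \col_l g l n.
  have hpi := pow_ideal n ha.
  have pre : forall i, ideal_pow a n (((1%:M - B) *m G - rr) i 0).
    move=> i'.
    have -> : ((1%:M - B) *m G - rr) i' 0 =
      (g i' n - (RZ i' + \sum_(j < size s) s`_j * ZZ i' j n)) +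
      \sum_(j < size s) s`_j * (ZZ i' j n - \sum_(l < k) C i' j l * g l n).
      rewrite mulmxBl mul1mx !mxE.
      have -> : \sum_(l < k) B i' l * G l 0 = \sum_(j < size s) s`_j * \sum_(l < k) C i' j l * g l n.
        rewrite /B /G; under eq_bigr => l _ do rewrite !mxE mulr_suml.
        rewrite exchange_big /=; apply: eq_bigr => j _; rewrite mulr_sumr.
        by apply: eq_bigr => l _; rewrite mulrA.
      under [X in _ = _ + X]eq_bigr => j _ do rewrite mulrBr.
      rewrite sumrB.
      move: (\sum_(j < size s) s`_j * ZZ i' j n) (\sum_(i < size s) s`_i * \sum_(l < k) C i' i l * g l n) => S1 S2.
      by rewrite opprD !addrA subrK addrAC.
    apply: ID => //; first by apply: (proj2 (hRZ i')).
    by apply: Isum => // j _; apply: IM => //; apply: hC.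
  have hd := core_mx hpi pre i.
  have -> : g i n - rho i = v * ((\det (1%:M - B) *: G - \adj (1%:M - B) *m rr) i 0).
    rewrite /rho /G !mxE.
    by rewrite mulrBr mulrA (mulrC v (\det _)) hv mul1r.
  by apply: IM.
move=> x hx; have [c hcx] := hgen x hx.
exists (\sum_(i < k) c i * rho i) => n; rewrite /compl_of.
have hpi := pow_ideal n ha.
have -> : \sum_(i < k) c i * rho i - x n =
  - (x n - \sum_(i < k) c i * g i n) - \sum_(i < k) c i * (g i n - rho i).
  rewrite opprB; under [X in _ = _ - X]eq_bigr => i _ do rewrite mulrBr.
  rewrite sumrB opprB; move: (\sum_(i < k) c i * g i n) (\sum_(i < k) c i * rho i) => P Q.
  by rewrite [RHS]addrC addrA subrK.
apply: IB => //; first by apply: IN => //; apply: hcx.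
by apply: Isum => // i _; apply: IM.
Qed.

End Basics.

Theorem theoremB (R : comPzRingType) (a : R -> Prop) :
  noetherian R -> is_ideal a -> (forall x, a x -> jacobson_radical x) ->
  (adically_complete a <-> completion_fg a).
Proof.
move=> hN ha hJ; split.
- move=> [_ hsurj]; exists 1%N, (fun _ => compl_of 1); split.
  + by move=> i n; rewrite /compl_of subrr; apply: I0; apply: pow_ideal.
  + move=> x hx; have [r hr] := hsurj x hx; exists (fun _ => r) => n.
    rewrite big_ord1 /compl_of mulr1.
    have -> : x n - r = - (r - x n) by rewrite opprB.
    by apply: IN; [apply: pow_ideal | apply: hr].
- move=> hfg; split; last by apply: surj_part.
  move=> r s hrs; apply/eqP; rewrite -subr_eq0; apply/eqP.
  by apply: (krull_zero hN ha hJ) => n; apply: hrs.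
Qed.
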